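(* Let $X\sim p^{\mathbb{Z}^d}$, $Y\sim q^{\mathbb{Z}^d}$ be i.i.d. processes over finite alphabets and let $\phi:X\to Y$ be a finitary homomorphism with $\mathbf{E}[R_\phi^{d/2}]<\infty$. Then there is a sequence $\delta_N\searrow0$ such that \[\mathbf{E}[|\mathcal{J}^c_{N,\lfloor\delta_N N\rfloor}|]=o(N^{d/2})\quad(N\to\infty).\]
   Context: A homomorphism $\phi:X\to Y$ is a measurable shift-commuting map $A^{\mathbb{Z}^d}\to B^{\mathbb{Z}^d}$ pushing $\mu=p^{\mathbb{Z}^d}$ to $\nu=q^{\mathbb{Z}^d}$. Its coding radius is $R_\phi(x)=\min\{n\in\mathbb{N}\cup\{\infty\}:\text{for }\mu\text{-a.e. }a,\ a|_{[-n,n]^d}=x|_{[-n,n]^d}\Rightarrow\phi(a)_0=\phi(x)_0\}$; finitary means $R_\phi<\infty$ a.s. Let $*\notin B$; for $n\in\mathbb{N}$ put $\phi^n_0(x)=\phi(x)_0$ if $R_\phi(x)\le n$ and $*$ otherwise (a.e. a function of $x|_{[-n,n]^d}$). For $\mathbb{T}_N^d=\mathbb{Z}^d/(N\mathbb{Z})^d$ and $N\ge2n+1$, define $\hat\phi^n:A^{\mathbb{T}_N^d}\to(B\cup\{*\})^{\mathbb{T}_N^d}$ by letting $\hat\phi^n(\hat x)_u$ be $\phi^n_0$ evaluated at the $N$-periodic extension of $T_{-u}\hat x$, where $(T_{-u}\hat x)_v=\hat x_{v+u}$. With $\hat X\sim p^{\mathbb{T}_N^d}$, $\mathcal{J}^c_{N,n}=\{u\in\mathbb{T}_N^d:\hat\phi^n(\hat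 X)_u=*\}$ (a random set). *)

(* Defs.v *)
From HB Require Import structures.
From mathcomp Require Import all_boot all_order all_algebra.
From mathcomp Require Import all_classical all_reals all_analysis.

Set Implicit Arguments.
Unset Strict Implicit.
Unset Printing Implicit Defensive.

Import Order.TTheory GRing.Theory Num.Theory.
Local Open Scope classical_set_scope.
Local Open Scope ring_scope.

(* The point is only needed because measurable types of mathcomp-analysis
   are pointed; its value plays no role (an alphabet carrying a probability
   vector is nonempty anyway). *)
HB.structure Definition FinPointed := {T of Finite T & Pointed T}.
Notation finPointedType := FinPointed.type.

Definition site (d : nat) := 'I_d -> int.

Definition site_add d (u v : site d) : site d := fun i => u i + v i.

Definition origin d : site d := fun _ => 0.

Definition box d (n : nat) : set (site d) :=
  [set v | forall i : 'I_d, (absz (v i) <= n)%N].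

Definition cylinder d (A : Type) (F : set (site d)) (w : site d -> A)
  : set (site d -> A) := [set x | forall v, F v -> x v = w v].

Definition cylinders d (A : finPointedType) : set (set (site d -> A)) :=
  [set C | exists F w, finite_set F /\ C = cylinder F w].

Notation Cfg d A := (g_sigma_algebraType (@cylinders d A)).

Definition shiftm d (A : Type) (u : site d) (x : site d -> A) : site d -> A :=
  fun v => x (site_add v u).

Definition prob_vector (R : realType) (A : finType) (p : A -> R) : Prop :=
  (forall a, 0 <= p a) /\ \sum_(a : A) p a = 1.

(* mu is the product measure p^{Z^d}: the measure of every finite-dimensional
   cylinder is the product of the one-site marginals (this determines the
   measure on the product sigma-algebra). *)
Definition is_product_measure (R : realType) d (A : finPointedType)
    (p : A -> R) (mu : probability (Cfg d A) R) : Prop :=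
  forall (F : set (site d)) (w : site d -> A), finite_set F ->
    mu (cylinder F w) = ((\big[*%R/1%R]_(v \in F) p (w v))%R)%:E.

Definition homomorphism (R : realType) d (A B : finPointedType)
    (mu : probability (Cfg d A) R) (nu : probability (Cfg d B) R)
    (phi : Cfg d A -> Cfg d B) : Prop :=
  [/\ measurable_fun setT phi,
      (forall (u : site d) (x : Cfg d A), phi (shiftm u x) = shiftm u (phi x))
    & (forall S : set (Cfg d B), measurable S -> mu (phi @^-1` S) = nu S)].

Definition codes_within (R : realType) d (A B : finPointedType)
    (mu : probability (Cfg d A) R) (phi : Cfg d A -> Cfg d B)
    (n : nat) (x : Cfg d A) : Prop :=
  {ae mu, forall a : Cfg d A,
     (forall v, box n v -> a v = x v) -> phi a (@origin d) = phi x (@origin d)}.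

(* R_phi(x) = min { n in N u {oo} : ... }  (the infimum of the empty set is +oo) *)
Definition coding_radius (R : realType) d (A B : finPointedType)
    (mu : probability (Cfg d A) R) (phi : Cfg d A -> Cfg d B)
    (x : Cfg d A) : \bar R :=
  ereal_inf [set (n%:R)%:E | n in [set n : nat | codes_within mu phi n x]].

Definition finitary (R : realType) d (A B : finPointedType)
    (mu : probability (Cfg d A) R) (phi : Cfg d A -> Cfg d B) : Prop :=
  {ae mu, forall x, (coding_radius mu phi x < +oo)%E}.

(* phi^n_0 : the symbol * is represented by None *)
Definition phin0 (R : realType) d (A B : finPointedType)
    (mu : probability (Cfg d A) R) (phi : Cfg d A -> Cfg d B)
    (n : nat) (x : Cfg d A) : option B :=
  if `[< (coding_radius mu phi x <= (n%:R)%:E)%E >] then Some (phi x (@origin d))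
  else None.

(* phi^n_0 is a.e. a function of x|_{[-n,n]^d}; this is that function,
   evaluated at (the restriction to [-n,n]^d of) an arbitrary configuration y:
   the value c such that phi^n_0(a) = c for mu-a.e. a agreeing with y on the
   box.  (On cylinders of positive measure c is unique; on null cylinders it
   is an arbitrary choice, which never matters below.) *)
Definition phin0_pat (R : realType) d (A B : finPointedType)
    (mu : probability (Cfg d A) R) (phi : Cfg d A -> Cfg d B)
    (n : nat) (y : site d -> A) : option B :=
  xget None [set c : option B | {ae mu, forall a : Cfg d A,
     (forall v, box n v -> a v = y v) -> phin0 mu phi n a = c}].

Notation torus N d := {ffun 'I_d -> 'I_N}.

Definition tor_of (N d : nat) (v : site d) : option (torus N d) :=
  match N return option (torus N d) with
  | 0 => None
  | N'.+1 => Some [ffun i => inord (absz ((v i) %% (N'.+1)%:Z)%Z)]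
  end.

Definition tshift (N d : nat) (A : Type) (u : torus N d)
    (xh : {ffun torus N d -> A}) : {ffun torus N d -> A} :=
  [ffun v : torus N d => xh (odflt v (tor_of N (fun i : 'I_d => ((v i + u i)%N)%:Z)))].

Definition perext (N d : nat) (A : pointedType) (xh : {ffun torus N d -> A})
  : site d -> A :=
  fun v => odflt point (omap xh (tor_of N v)).

Definition phihat (R : realType) d (A B : finPointedType)
    (mu : probability (Cfg d A) R) (phi : Cfg d A -> Cfg d B)
    (N n : nat) (xh : {ffun torus N d -> A}) (u : torus N d) : option B :=
  phin0_pat mu phi n (perext (tshift u xh)).

Definition Jc (R : realType) d (A B : finPointedType)
    (mu : probability (Cfg d A) R) (phi : Cfg d A -> Cfg d B)
    (N n : nat) (xh : {ffun torus N d -> A}) : {set torus N d} :=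
  [set u | phihat mu phi n xh u == None].

Definition EJc (R : realType) d (A B : finPointedType) (p : A -> R)
    (mu : probability (Cfg d A) R) (phi : Cfg d A -> Cfg d B)
    (N n : nat) : R :=
  \sum_(xh : {ffun torus N d -> A})
     (\prod_(v : torus N d) p (xh v)) * (#|Jc mu phi n xh|)%:R.

(* Main.v *)
Require Import Defs.
From HB Require Import structures.
From mathcomp Require Import all_boot all_order all_algebra.
From mathcomp Require Import all_classical all_reals all_analysis.
From mathcomp Require Import zify measurable_realfun.
Import Order.TTheory GRing.Theory Num.Theory.
Local Open Scope classical_set_scope.
Local Open Scope ring_scope.

Set Implicit Arguments.
Unset Strict Implicit.
Unset Printing Implicit Defensive.

Section Box.
Variable d : nat.

Definition Bx (m : nat) := {ffun 'I_d -> 'I_(m.*2.+1)}.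
Definition enc (m : nat) (t : Bx m) : site d := fun i => (t i)%:Z - m%:Z.
Definition dec (m : nat) (v : site d) : Bx m :=
  [ffun i => inord (absz (v i + m%:Z))].

Lemma enc_dec m v : box m v -> enc (dec m v) = v.
Proof.
move=> bv; apply: funext => i; rewrite /enc /dec ffunE.
have := bv i; move=> h.
rewrite inordK; first by lia.
lia.
Qed.

Lemma box_enc m (t : Bx m) : box m (enc t).
Proof.
move=> i; rewrite /enc; have := ltn_ord (t i); lia.
Qed.

Lemma box_image m : @box d m = (@enc m) @` setT.
Proof.
apply/seteqP; split=> v.
  by move=> bv; exists (dec m v) => //; rewrite enc_dec.
by case=> t _ <-; apply: box_enc.
Qed.

Lemma box_fin m : finite_set (@box d m).
Proof. by rewrite box_image; apply: finite_image; apply: finite_finset. Qed.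

End Box.
Section Meas.
Variables (R : realType) (d : nat) (A B : finPointedType).
Variables (mu : probability (Cfg d A) R) (phi : Cfg d A -> Cfg d B).

Lemma cyl_meas (F : set (site d)) (w : site d -> A) : finite_set F ->
  measurable (cylinder F w : set (Cfg d A)).
Proof. by move=> fF; apply: sub_sigma_algebra; exists F, w. Qed.

Definition agree m (a y : site d -> A) := forall v, box m v -> a v = y v.

Lemma agree_sym m a y : agree m a y -> agree m y a.
Proof. by move=> h v bv; rewrite h. Qed.

Lemma agree_trans m a b c : agree m a b -> agree m b c -> agree m a c.
Proof. by move=> h1 h2 v bv; rewrite h1 // h2. Qed.

Lemma pat_eq m (y y' : site d -> A) : agree m y y' ->
  phin0_pat mu phi m y = phin0_pat mu phi m y'.
Proof.
move=> hy; rewrite /phin0_pat; congr xget; apply/funext => c; apply/propext.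
by split; apply: filterS => a h ag; apply: h => v bv; rewrite ag // ?hy.
Qed.

Lemma codes_mono n m (a : Cfg d A) : (n <= m)%N ->
  codes_within mu phi n a -> codes_within mu phi m a.
Proof.
move=> nm; apply: filterS => x h ag; apply: h => v bv; apply: ag.
by move=> i; apply: leq_trans (bv i) nm.
Qed.

Lemma codes_le m (a : Cfg d A) : codes_within mu phi m a ->
  (coding_radius mu phi a <= (m%:R)%:E)%E.
Proof. by move=> h; apply: ereal_inf_lbound; exists m. Qed.

Lemma le_codes m (a : Cfg d A) : (coding_radius mu phi a <= (m%:R)%:E)%E ->
  codes_within mu phi m a.
Proof.
move=> h; apply: contrapT => nc.
have : ((m.+1%:R)%:E <= coding_radius mu phi a)%E.
  apply/ereal_infP => _ [n cn <-]; rewrite lee_fin ler_nat.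
  by rewrite ltnNge; apply/negP => nm; apply: nc; apply: codes_mono cn.
move=> h2; have := le_trans h2 h; rewrite lee_fin ler_nat ltnn //.
Qed.

Lemma phin0_NoneP m (a : Cfg d A) :
  phin0 mu phi m a = None <-> ~ (coding_radius mu phi a <= (m%:R)%:E)%E.
Proof.
by rewrite /phin0; case: asboolP => h; split => //.
Qed.

Lemma pat_spec m (y : site d -> A) :
  {ae mu, forall a : Cfg d A, agree m a y ->
     phin0 mu phi m a = phin0_pat mu phi m y}.
Proof.
rewrite /phin0_pat.
set P := [set c | _].
have : P (xget None P); last by [].
apply: xgetPex.
case: (pselect (exists a0 : Cfg d A, agree m a0 y /\
   (coding_radius mu phi a0 <= (m%:R)%:E)%E)).
  case=> a0 [ag0 le0]; exists (Some (phi a0 (@origin d))).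
  have hc := le_codes le0.
  rewrite /P /=; apply: filterS hc => a h ag.
  have ag1 : agree m a a0 by apply: agree_trans ag (agree_sym ag0).
  have ha := h ag1.
  rewrite /phin0; case: asboolP => [_|nle]; first by rewrite ha.
  exfalso; apply: nle.
  apply: codes_le; apply: filterS (le_codes le0) => a' h' ag'.
  rewrite h' ?ha //; exact: agree_trans ag' ag1.
move=> no; exists None; rewrite /P /=; apply: nearW => a ag.
by apply/phin0_NoneP => hle; apply: no; exists a.
Qed.

Definition yext m (t : {ffun Bx d m -> A}) : site d -> A := fun v => t (dec m v).

Definition pat m (x : site d -> A) : {ffun Bx d m -> A} := [ffun s => x (enc s)].
Arguments pat : clear implicits.

Lemma agree_pat m (x : site d -> A) : agree m x (yext (pat m x)).
Proof. by move=> v bv; rewrite /yext /pat ffunE enc_dec. Qed.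

Definition S m : set (Cfg d A) := [set x | phin0_pat mu phi m x = None].

Lemma S_ae m : {ae mu, forall a, S m a ->
   ~ (coding_radius mu phi a <= (m%:R)%:E)%E}.
Proof.
have h : forall t : {ffun Bx d m -> A}, {ae mu, forall a : Cfg d A,
    agree m a (yext t) -> phin0_pat mu phi m (yext t) = None ->
    phin0 mu phi m a = None}.
  by move=> t; apply: filterS (pat_spec m (yext t)) => a h ag E; rewrite h.
apply: filterS (filter_forall _ h) => a H Sa.
apply/phin0_NoneP; apply: (H (pat m a)); first exact: agree_pat.
by rewrite -(pat_eq ((@agree_pat m a))).
Qed.

Lemma S_meas m : measurable (S m).
Proof.
have -> : S m = \bigcup_(t in [set t : {ffun Bx d m -> A} |
     phin0_pat mu phi m (yext t) = None]) cylinder (box m) (yext t).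
  apply/seteqP; split => x.
    move=> Sx; exists (pat m x); last exact: agree_pat.
    by rewrite /= -(pat_eq ((@agree_pat m x))).
  case=> t /= E cx; rewrite /S /= -E; apply: pat_eq; exact: cx.
apply: fin_bigcup_measurable; first exact: finite_finset.
by move=> t _; apply: cyl_meas; apply: box_fin.
Qed.

End Meas.
Lemma modz_shift (x y c K : int) : x = y + c * K -> (x %% K)%Z = (y %% K)%Z.
Proof. by move=> ->; rewrite addrC modzMDl. Qed.

Lemma modz_id {t K : int} : 0 <= t < K -> (t %% K)%Z = t.
Proof. exact: modz_small. Qed.

Lemma coord_inj (K n : nat) (t u : int) : (0 < K)%N -> 0 <= t < K%:Z ->
  let r := ((t - u) %% K%:Z)%Z in
  (((if r <= n%:Z then r else r - K%:Z) + u) %% K%:Z)%Z = t.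
Proof.
move=> K0 ht r.
rewrite -[RHS](modz_id ht); apply: (@modz_shift _ _ (- ((t - u) %/ K%:Z)%Z - (if r <= n%:Z then 0 else 1))).
have := divz_eq (t - u) K%:Z; rewrite -/r => e.
case: ifP => _; lia.
Qed.

Lemma coord_box (K n : nat) (v : int) (u : nat) : (n.*2.+1 <= K)%N -> (u < K)%N ->
  (absz v <= n)%N ->
  let s := absz (v %% K%:Z)%Z in
  let t := absz ((((s + u)%N)%:Z) %% K%:Z)%Z in
  let r := (((t%:Z) - (u%:Z)) %% K%:Z)%Z in
  (if r <= n%:Z then r else r - K%:Z) = v.
Proof.
move=> hK hu hv s t r.
have K0 : (K%:Z != 0) by apply/eqP; lia.
have Kp : 0 < K%:Z by lia.
have hs : s%:Z = (v %% K%:Z)%Z by rewrite /s gez0_abs ?modz_ge0.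
have ht : t%:Z = (((s + u)%N)%:Z %% K%:Z)%Z by rewrite /t gez0_abs ?modz_ge0.
have hr : r = (v %% K%:Z)%Z.
  rewrite /r; apply: (@modz_shift _ _ (- ((((s + u)%N)%:Z) %/ K%:Z)%Z - (v %/ K%:Z)%Z)).
  have := divz_eq (((s + u)%N)%:Z) K%:Z; have := divz_eq v K%:Z; lia.
rewrite hr; case: (lerP 0 v) => v0.
  rewrite modz_id; last lia.
  by case: ifP => //; lia.
have -> : (v %% K%:Z)%Z = v + K%:Z.
  rewrite (@modz_shift _ (v + K%:Z) (-1)); last lia.
  by rewrite modz_id //; lia.
case: ifP => //; lia.
Qed.

Section Torus.
Variables (R : realType) (d : nat) (A B : finPointedType) (p : A -> R).
Variables (mu : probability (Cfg d A) R) (phi : Cfg d A -> Cfg d B).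
Hypothesis hprod : is_product_measure p mu.
Variables (N n : nat).
Hypothesis hNn : (n.*2.+1 <= N.+1)%N.
Variable u : torus N.+1 d.

Definition emb (t : torus N.+1 d) : site d := fun i =>
  let r := (((t i)%:Z - (u i)%:Z) %% (N.+1)%:Z)%Z in
  if r <= n%:Z then r else r - (N.+1)%:Z.

Definition tinv (v : site d) : torus N.+1 d :=
  [ffun i => inord (absz ((v i + (u i)%:Z) %% (N.+1)%:Z)%Z)].

Lemma tinv_emb t : tinv (emb t) = t.
Proof.
apply/ffunP => i; rewrite ffunE; apply/val_inj => /=.
rewrite /emb coord_inj //; last by rewrite ltz_nat ltn_ord.
by rewrite absz_nat inordK.
Qed.

Lemma emb_inj : injective emb.
Proof. exact: can_inj tinv_emb. Qed.

Definition piu (x : site d -> A) : {ffun torus N.+1 d -> A} :=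
  [ffun t => x (emb t)].

Lemma perext_agree (x : Cfg d A) : agree n x (perext (tshift u (piu x))).
Proof.
move=> v bv; rewrite /perext /= /tshift ffunE /= /piu ffunE; congr x.
apply: funext => i; rewrite /emb !ffunE /=.
have K0 : (N.+1)%:Z != 0 by [].
rewrite inordK; last first.
  have := ltz_pmod (((inord (absz (v i %% (N.+1)%:Z)%Z) : 'I_N.+1) + u i)%N%:Z) (isT : 0 < (N.+1)%:Z).
  have := modz_ge0 (((inord (absz (v i %% (N.+1)%:Z)%Z) : 'I_N.+1) + u i)%N%:Z) K0.
  lia.
rewrite inordK; last first.
  have := ltz_pmod (v i) (isT : 0 < (N.+1)%:Z).
  have := modz_ge0 (v i) K0.
  lia.
by rewrite coord_box // ltn_ord.
Qed.

Lemma cyl_piu xh : [set x : Cfg d A | piu x = xh] =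
  cylinder (emb @` setT) (fun v => xh (tinv v)).
Proof.
apply/seteqP; split => x /=.
  by move=> <- _ [t _ <-]; rewrite tinv_emb /piu ffunE.
move=> h; apply/ffunP => t; rewrite /piu ffunE.
by rewrite (h (emb t)) ?tinv_emb //; exists t.
Qed.

Lemma fsbigT_fin (T : finType) (F : T -> R) :
  (\big[*%R/1%R]_(t \in [set: T]) F t = \prod_(t : T) F t)%R.
Proof.
rewrite (fsbigE (enum T)) ?enum_uniq //.
  by rewrite big_enum_cond /=; apply: eq_bigl => t; rewrite in_setT.
by move=> i _; rewrite mem_enum.
Qed.

Lemma mu_piu xh : mu [set x : Cfg d A | piu x = xh] =
  (\prod_(t : torus N.+1 d) p (xh t))%:E.
Proof.
rewrite cyl_piu hprod; last by apply: finite_image; apply: finite_finset.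
congr EFin; rewrite fsbig_image; last by move=> a b _ _; apply: emb_inj.
rewrite fsbigT_fin; apply: eq_bigr => t _; by rewrite tinv_emb.
Qed.


Lemma fsbigT_gen (T : finType) (idx : \bar R) (op : Monoid.com_law idx) (F : T -> \bar R) :
  \big[op/idx]_(t \in [set: T]) F t = \big[op/idx]_(t : T) F t.
Proof.
rewrite (fsbigE (enum T)) ?enum_uniq //.
  by rewrite big_enum_cond /=; apply: eq_bigl => t; rewrite in_setT.
by move=> i _; rewrite mem_enum.
Qed.

Lemma fsbig_pred (T : finType) (P : pred T) (F : T -> \bar R) :
  (\sum_(t \in [set t | P t]) F t = \sum_(t | P t) F t)%E.
Proof.
rewrite fsbig_mkcond fsbigT_gen [RHS]big_mkcond /=; apply: eq_bigr => t _.
rewrite /patch; case: ifPn => h.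
  by rewrite (set_mem h).
case: ifP => // Pt; exfalso; move/negP: h; apply; exact: mem_set.
Qed.

Lemma sum_le (E : pred {ffun torus N.+1 d -> A}) (Sset : set (Cfg d A)) :
  measurable Sset -> (forall x, E (piu x) -> Sset x) ->
  ((\sum_(xh | E xh) \prod_(t : torus N.+1 d) p (xh t))%:E <= mu Sset)%E.
Proof.
move=> mS ES.
have mF : forall xh, measurable [set x : Cfg d A | piu x = xh].
  by move=> xh; rewrite cyl_piu; apply: cyl_meas; apply: finite_image; apply: finite_finset.
have := @measure_fin_bigcup _ _ _ mu _ [set xh | E xh]
   (fun xh => [set x : Cfg d A | piu x = xh]) finite_finset.
move=> /(_ _ (fun xh _ => mF xh)) h.
have tr : trivIset [set xh | E xh] (fun xh => [set x : Cfg d A | piu x = xh]).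
  by move=> i j _ _ [x [/= <- <-]].
move: (h tr) => {}h.
rewrite -sumEFin.
have -> : (\sum_(xh | E xh) (\prod_(t : torus N.+1 d) p (xh t))%:E)%E =
  (\sum_(xh \in [set xh | E xh]) mu [set x : Cfg d A | piu x = xh])%E.
  by rewrite fsbig_pred; apply: eq_bigr => xh _; rewrite mu_piu.
rewrite -h; apply: le_measure; rewrite ?inE //.
  by apply: fin_bigcup_measurable => //; apply: finite_finset.
by move=> x [xh /= Exh hx]; apply: ES; rewrite hx.
Qed.

Lemma term_le : \sum_(xh : {ffun torus N.+1 d -> A})
   (\prod_(v : torus N.+1 d) p (xh v)) * (u \in Jc mu phi n xh)%:R
   <= fine (mu (S mu phi n)).
Proof.
have -> : \sum_(xh : {ffun torus N.+1 d -> A})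
   (\prod_(v : torus N.+1 d) p (xh v)) * (u \in Jc mu phi n xh)%:R =
   \sum_(xh | u \in Jc mu phi n xh) \prod_(v : torus N.+1 d) p (xh v).
  rewrite [RHS]big_mkcond; apply: eq_bigr => xh _.
  by case: (u \in _); rewrite ?mulr1 ?mulr0.
rewrite -lee_fin fineK; last by apply: fin_num_measure; apply: S_meas.
apply: sum_le; first exact: S_meas.
move=> x; rewrite /Jc inE => /eqP h.
by rewrite /S /= (pat_eq mu phi (perext_agree x)).
Qed.

End Torus.

Lemma EJc_le (R : realType) (d : nat) (A B : finPointedType) (p : A -> R)
  (mu : probability (Cfg d A) R) (phi : Cfg d A -> Cfg d B) :
  is_product_measure p mu -> forall N n, (n.*2.+1 <= N.+1)%N ->
  EJc p mu phi N.+1 n <= ((N.+1)%:R ^+ d) * fine (mu (S mu phi n)).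
Proof.
move=> hprod N n hNn; rewrite /EJc.
have -> : \sum_(xh : {ffun torus N.+1 d -> A})
     (\prod_(v : torus N.+1 d) p (xh v)) * (#|Jc mu phi n xh|)%:R =
  \sum_(u : torus N.+1 d) \sum_(xh : {ffun torus N.+1 d -> A})
     (\prod_(v : torus N.+1 d) p (xh v)) * (u \in Jc mu phi n xh)%:R.
  rewrite exchange_big /=; apply: eq_bigr => xh _.
  rewrite -mulr_sumr; congr (_ * _).
  rewrite -sum1_card natr_sum big_mkcond /=; apply: eq_bigr => i _.
  by case: (i \in _).
apply: (@le_trans _ _ (\sum_(u : torus N.+1 d) fine (mu (S mu phi n)))).
  by apply: ler_sum => u _; apply: term_le.
by rewrite sumr_const card_ffun !card_ord -[X in X <= _]mulr_natl natrX.
Qed.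

Definition Pw (R : realType) (d k : nat) : R := (k%:R) `^ (d%:R / 2).

Lemma le_int_gen (dd : measure_display) (T : measurableType dd) (R : realType)
  (mu : {measure set T -> \bar R}) (f1 f2 : T -> \bar R) :
  (forall x, (0 <= f1 x)%E) -> (forall x, (f1 x <= f2 x)%E) ->
  (\int[mu]_x f1 x <= \int[mu]_x f2 x)%E.
Proof.
move=> f10 f12.
have f20 : forall x, (0 <= f2 x)%E by move=> x; apply: le_trans (f10 x) (f12 x).
rewrite !ge0_integralTE //; apply: le_ereal_sup => _ [h hle <-].
by exists h => // x; apply: le_trans (hle x) (f12 x).
Qed.

Section PartB.
Variables (R : realType) (d : nat) (A B : finPointedType).
Variables (mu : probability (Cfg d A) R) (phi : Cfg d A -> Cfg d B).
Hypothesis hfin : finitary mu phi.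
Hypothesis hint :
  (\int[mu]_x ((coding_radius mu phi x) `^ (d%:R / 2))%E < +oo)%E.

Local Notation Sn := (S mu phi).

Let f k (x : Cfg d A) : \bar R := (Pw R d k * \1_(Sn k) x)%:E.
Let G x := esups (fun k => f k x) 0.
Let U m := \bigcup_(k in [set k | (m <= k)%N]) Sn k.
Let g m x := ((\1_(U m) x)%:E * G x)%E.

Lemma Pw_ge0 k : 0 <= Pw R d k.
Proof. exact: powR_ge0. Qed.

Let f_ge0 k x : (0 <= f k x)%E.
Proof. by rewrite lee_fin mulr_ge0 // ?Pw_ge0 // indicE. Qed.

Let G_ge0 x : (0 <= G x)%E.
Proof.
apply: le_trans (f_ge0 0 x) _; apply: ereal_sup_ubound; by exists 0%N.
Qed.

Let G_Sk k x : Sn k x -> ((Pw R d k)%:E <= G x)%E.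
Proof.
move=> Sx; apply: ereal_sup_ubound; exists k => //=.
by rewrite /f indicE mem_set // mulr1.
Qed.

Let mf k : measurable_fun setT (f k).
Proof.
apply/measurable_EFinP; apply: measurable_funM; first exact: measurable_cst.
by apply: measurable_indic; apply: S_meas.
Qed.

Let mG : measurable_fun setT G.
Proof. exact: (measurable_fun_esups mf 0). Qed.

Let Gle : {ae mu, forall x, (G x <= coding_radius mu phi x `^ (d%:R / 2))%E}.
Proof.
apply: filterS (ae_foralln (fun k => S_ae mu phi k)) => x H.
apply: ge_ereal_sup => _ [k _ <-]; rewrite /f indicE.
case: (boolP (x \in Sn k)) => xS; last by rewrite mulr0 poweR_ge0.
rewrite mulr1; have nle := H k (set_mem xS).
case eR: (coding_radius mu phi x) nle => [s| |] nle.
- rewrite poweR_EFin lee_fin; apply: ge0_ler_powR => //.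
  + by rewrite nnegrE ler0n.
  + rewrite nnegrE; apply: le_trans (ler0n _ k) _.
    by apply: ltW; rewrite ltNge; apply/negP => h; apply: nle; rewrite lee_fin.
  + by apply: ltW; rewrite ltNge; apply/negP => h; apply: nle; rewrite lee_fin.
- rewrite poweRE; case: ifP => [/eqP r0|_]; last by rewrite leey.
  by rewrite /Pw r0 powRr0.
- by exfalso; apply: nle; rewrite leNye.
Qed.

Let intG : (\int[mu]_x G x < +oo)%E.
Proof.
apply: le_lt_trans hint.
have [N [mN N0 sub]] := Gle.
rewrite (ge0_negligible_integral (mu:=mu) (N:=N) (D:=setT) (f:=G) mN measurableT mG _ N0); last by move=> x _; apply: G_ge0.
rewrite integral_mkcond; apply: le_int_gen.
  by move=> x; rewrite /patch; case: ifP => // _; apply: G_ge0.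
move=> x; rewrite /patch; case: ifPn => [xin|_]; last by apply: poweR_ge0.
have := set_mem xin; rewrite /setD /= => -[_ xN].
apply: contrapT => h; apply: xN; apply: sub => /=; exact: h.
Qed.

Let iG : mu.-integrable setT G.
Proof.
apply/integrableP; split => //.
under eq_integral do rewrite gee0_abs //.
exact: intG.
Qed.

Let Umeas m : measurable (U m).
Proof. by apply: bigcup_measurable => k _; apply: S_meas. Qed.

Let mg m : measurable_fun setT (g m).
Proof.
apply: emeasurable_funM => //.
by apply/measurable_EFinP; apply: measurable_indic.
Qed.

Let g_ge0 m x : (0 <= g m x)%E.
Proof. by rewrite /g indicE; case: (_ \in _); rewrite ?mul1e ?mul0e. Qed.

Let g_le m x : (`|g m x| <= G x)%E.
Proof.
rewrite gee0_abs // /g indicE; case: (_ \in _); rewrite ?mul1e ?mul0e //.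
Qed.

Let g_cvg : {ae mu, forall x, setT x -> (g^~ x) @ \oo --> (cst 0%E) x}.
Proof.
apply: filterS2 (ae_foralln (fun k => S_ae mu phi k)) hfin => x H Rfin _.
have R0 : (0 <= coding_radius mu phi x)%E.
  apply/ereal_infP => _ [n _ <-]; by rewrite lee_fin ler0n.
case eR: (coding_radius mu phi x) R0 Rfin => [s| |] s0 sfin; last 2 first.
- by rewrite ltxx in sfin.
- by [].
apply: cvg_near_cst; near=> m.
rewrite /g indicE; case: (boolP (x \in U m)) => //; rewrite ?mul0e //.
move=> /set_mem [k /= mk Sk]; exfalso; apply: (H k Sk); rewrite eR lee_fin.
apply: le_trans (_ : m%:R <= _); last by rewrite ler_nat.
near: m; exact: nbhs_infty_ger.
Unshelve. all: by end_near.
Qed.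

Let intg_cvg : (fun m => (\int[mu]_x g m x)%E) @ \oo --> 0%E.
Proof.
have fg : {ae mu, forall x n, setT x -> (`|g n x| <= G x)%E}.
  by apply: aeW => x n _; exact: g_le.
have [_ _ h] := @dominated_convergence _ _ _ mu setT measurableT g (cst 0%E) G
  mg (measurable_cst _) g_cvg iG fg.
by rewrite integral0 in h.
Qed.

Let intg_le m : (\int[mu]_x g m x <= \int[mu]_x G x)%E.
Proof.
apply: ge0_le_integral => // x _.
by apply: le_trans (g_le m x); apply: lee_abs.
Qed.

Let intg_fin m : (\int[mu]_x g m x)%E \is a fin_num.
Proof.
rewrite ge0_fin_numE; last by apply: integral_ge0 => x _.
exact: le_lt_trans (intg_le m) intG.
Qed.

Lemma partB : exists T : nat -> R,
  [/\ forall n, 0 <= T n, {homo T : m n / (m <= n)%N >-> n <= m},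
      T @ \oo --> 0 &
      forall n, Pw R d n * fine (mu (Sn n)) <= T n].
Proof.
exists (fun m => fine (\int[mu]_x g m x)%E); split.
- by move=> n; apply: fine_ge0; apply: integral_ge0 => x _.
- move=> m n mn; rewrite fine_le ?intg_fin //.
  apply: ge0_le_integral => // x _; rewrite /g.
  apply: lee_wpmul2r; first exact: G_ge0.
  rewrite lee_fin !indicE.
  case: (boolP (x \in U n)) => xn; last by rewrite ler0n.
  rewrite mem_set //.
  by case: (set_mem xn) => k /= nk Sk; exists k => //=; apply: leq_trans mn nk.
- by have /fine_cvgP[] := intg_cvg.
- move=> n; rewrite -lee_fin fineK ?intg_fin //.
  rewrite EFinM fineK; last by apply: fin_num_measure; apply: S_meas.
  have -> : ((Pw R d n)%:E * mu (Sn n))%E =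
      (\int[mu]_x ((Pw R d n)%:E * (\1_(Sn n) x)%:E))%E.
    rewrite ge0_integralZl_EFin //; last exact: Pw_ge0.
      by rewrite integral_indic ?setIT //; apply: S_meas.
    by apply/measurable_EFinP; apply: measurable_indic; apply: S_meas.
  apply: ge0_le_integral => //.
  + by move=> x _; rewrite mule_ge0 // lee_fin ?Pw_ge0 // indicE.
  + apply: emeasurable_funM; first exact: measurable_cst.
    by apply/measurable_EFinP; apply: measurable_indic; apply: S_meas.
  + move=> x _; rewrite indicE /g indicE.
    case: (boolP (x \in Sn n)) => xS /=.
      have xU : x \in U n by apply: mem_set; exists n => //=; exact: set_mem xS.
      rewrite xU /= mule1 mul1e; exact: G_Sk (set_mem xS).
    by rewrite mule0 mule_ge0 // lee_fin ler0n.
Qed.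

End PartB.

Definition sN (N : nat) : nat := \max_(j < N.+1 | (j * j <= N)%N) j.

Lemma sN_ge j N : (j * j <= N)%N -> (j <= sN N)%N.
Proof.
move=> h; have jN : (j < N.+1)%N.
  by rewrite ltnS; apply: leq_trans h; nia.
exact: (@leq_bigmax_cond _ (fun i : 'I_N.+1 => (i * i <= N)%N) (fun i => nat_of_ord i) (Ordinal jN) h).
Qed.

Lemma sN_sq N : (sN N * sN N <= N)%N.
Proof.
rewrite /sN; apply: (big_ind (fun x => (x * x <= N)%N)) => //.
by move=> x y hx hy; rewrite /maxn; case: ifP.
Qed.

Lemma sN_mono : {homo sN : m n / (m <= n)%N}.
Proof. by move=> m n mn; apply: sN_ge; apply: leq_trans (sN_sq m) mn. Qed.

Lemma sN_ge1 N : (1 <= N)%N -> (1 <= sN N)%N.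
Proof. by move=> h; apply: sN_ge. Qed.

Section Kdef.
Variables (R : realType) (d : nat).

Definition cond (e : R) (N k : nat) : bool :=
  (k.+1 * k.+1 <= N)%N && ((k.+1%:R ^+ d.+1 * e <= 1)).

Definition kN (e : R) (N : nat) : nat := \max_(k < N | cond e N k) k.

Lemma kN_ge e N j : (j < N)%N -> cond e N j -> (j <= kN e N)%N.
Proof.
move=> jN h.
exact: (@leq_bigmax_cond _ (fun i : 'I_N => cond e N i) (fun i => nat_of_ord i) (Ordinal jN) h).
Qed.

Lemma kN_prop e N : kN e N = 0%N \/ ((kN e N < N)%N /\ cond e N (kN e N)).
Proof.
suff : (kN e N == 0%N) || ((kN e N < N)%N && cond e N (kN e N)).
  by case/orP => [/eqP -> | /andP[]]; [left | right].
rewrite /kN; apply: (big_ind (fun x => (x == 0%N) || ((x < N)%N && cond e N x))) => //.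
  by move=> x y hx hy; rewrite /maxn; case: ifP.
by move=> i ci; rewrite ltn_ord ci orbT.
Qed.

End Kdef.

Section Chain.
Variables (R : realType) (d : nat).

Lemma PwM m n : Pw R d (m * n) = Pw R d m * Pw R d n.
Proof. by rewrite /Pw natrM powRM. Qed.

Lemma Pw_mono m n : (m <= n)%N -> Pw R d m <= Pw R d n.
Proof.
by move=> mn; apply: ge0_ler_powR; rewrite ?nnegrE ?ler_nat.
Qed.

Lemma Pw_sq N : Pw R d N * Pw R d N = N%:R ^+ d.
Proof.
rewrite -expr2 -powR_mulrn ?powR_ge0 // -powRrM -powR_mulrn //.
by congr (_ `^ _); rewrite divfK.
Qed.

Lemma Pw_le_pow x : (1 <= x)%N -> Pw R d x <= x%:R ^+ d.
Proof.
move=> x1; rewrite -powR_mulrn // /Pw; apply: ler_powR; first by rewrite ler1n.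
by rewrite ler_pdivrMr // ler_peMr // ler1n.
Qed.

Lemma chain N n k (a e : R) : (1 <= n)%N -> (N <= (k.+1).*2 * n)%N ->
  0 <= a -> Pw R d n * a <= e -> k.+1%:R ^+ d.+1 * e <= 1 ->
  N%:R ^+ d * a <= (2%:R ^+ d / k.+1%:R) * Pw R d N.
Proof.
move=> n1 hN a0 hPe hke.
have e0 : 0 <= e by apply: le_trans hPe; rewrite mulr_ge0 ?Pw_ge0.
rewrite -Pw_sq -mulrA [X in _ <= X]mulrC.
apply: ler_wpM2l; first exact: Pw_ge0.
have h1 : Pw R d N <= Pw R d ((k.+1).*2) * Pw R d n by rewrite -PwM; apply: Pw_mono.
apply: (@le_trans _ _ (Pw R d ((k.+1).*2) * (Pw R d n * a))).
  by rewrite mulrA; apply: ler_wpM2r.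
apply: (@le_trans _ _ (((k.+1).*2)%:R ^+ d * e)).
  apply: ler_pM => //; first exact: Pw_ge0.
    by rewrite mulr_ge0 ?Pw_ge0.
  by apply: Pw_le_pow.
rewrite -muln2 natrM exprMn [_ ^+ d * 2 ^+ d]mulrC -mulrA.
apply: ler_wpM2l; first by rewrite exprn_ge0.
by rewrite -[X in _ <= X]div1r ler_pdivlMr // mulrAC -exprSr.
Qed.

End Chain.
Lemma floor_div (R : realType) (N K : nat) : (0 < K)%N ->
  absz (Num.floor ((K%:R)^-1 * N%:R : R)) = (N %/ K)%N.
Proof.
move=> K0; rewrite (@floor_def _ _ (N %/ K)%:Z) //.
have -> : ((N %/ K)%:Z + 1)%R = ((N %/ K).+1)%:Z by rewrite -addn1 PoszD.
rewrite -!pmulrn.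
have Kp : (0 : R) < K%:R by rewrite ltr0n.
rewrite ler_pdivlMl // ltr_pdivrMl // -!natrM ler_nat ltr_nat.
rewrite mulnC leq_trunc_div /= mulnC; exact: ltn_ceil.
Qed.

Lemma partC (R : realType) (d : nat) (T a : nat -> R) (E : nat -> nat -> R) :
  (forall n, 0 <= T n) -> {homo T : m n / (m <= n)%N >-> n <= m} ->
  T @ \oo --> 0 ->
  (forall n, 0 <= a n) -> (forall n, Pw R d n * a n <= T n) ->
  (forall N n, (n.*2.+1 <= N.+1)%N -> E N.+1 n <= (N.+1)%:R ^+ d * a n) ->
  exists delta : nat -> R,
    [/\ {homo delta : m n / (m <= n)%N >-> n <= m},
        delta @ \oo --> 0
      & forall eps : R, 0 < eps ->
          \forall N \near \oo,
            E N (absz (Num.floor (delta N * N%:R)))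
              <= eps * (N%:R `^ (d%:R / 2))].
Proof.
move=> T0 Thomo Tcvg a0 haT hE.
pose e N := T (sN N).
have ehomo : {homo e : m n / (m <= n)%N >-> n <= m}.
  by move=> m n mn; apply: Thomo; apply: sN_mono.
have esmall : forall c, 0 < c -> \forall N \near \oo, e N <= c.
  move=> c c0; have [n0 _ h] := (cvgrPdist_lt _ _).1 Tcvg c c0.
  exists (n0 * n0)%N => // N /= hN; rewrite /e.
  have := h (sN N) (sN_ge hN); rewrite /= sub0r normrN ger0_norm //.
  exact: ltW.
pose k N := kN d (e N) N.
have khomo : {homo k : m n / (m <= n)%N}.
  move=> m n mn; rewrite /k; case: (kN_prop d (e m) m) => [-> //| [km cm]].
  apply: kN_ge; first exact: leq_trans km mn.
  move: cm; rewrite /cond => /andP[h1 h2]; rewrite (leq_trans h1 mn) /=.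
  apply: le_trans h2; apply: ler_wpM2l; first by rewrite exprn_ge0.
  exact: ehomo.
have kinf : forall K, \forall N \near \oo, (K <= k N)%N.
  move=> K.
  have c0 : 0 < (K.+1%:R ^+ d.+1 : R)^-1 by rewrite invr_gt0 exprn_gt0.
  have [n1 _ h1] := esmall _ c0.
  exists (maxn n1 (K.+1 * K.+1)) => // N /=; rewrite geq_max => /andP[hn1 hK].
  apply: kN_ge; first by apply: leq_trans hK; nia.
  rewrite /cond hK /=.
  have := h1 N hn1.
  have xp : 0 < (K.+1%:R ^+ d.+1 : R) by rewrite exprn_gt0.
  by rewrite -(ler_pM2l xp) mulrV // unitfE gt_eqF.
pose delta N : R := (k N).+1%:R^-1.
exists delta; split.
- by move=> m n mn; rewrite /delta lef_pV2 ?posrE // ler_nat ltnS khomo.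
- apply/cvgrPdist_lt => c c0.
  have [K hK] : exists K : nat, c^-1 < K%:R.
    by have := nbhs_infty_gtr (c^-1); move/filter_ex.
  apply: filterS (kinf K) => N hN.
  rewrite sub0r normrN ger0_norm; last by rewrite /delta invr_ge0.
  rewrite /delta -[c]invrK ltf_pV2 ?posrE ?invr_gt0 //.
  apply: lt_le_trans hK _; rewrite ler_nat; exact: leq_trans hN (leqnSn _).
move=> eps eps0.
have [K0 hK0] : exists K0 : nat, 2%:R ^+ d / eps < K0%:R.
  by have := nbhs_infty_gtr (2%:R ^+ d / eps); move/filter_ex.
apply: filterS (kinf (maxn 2 K0)) => N; rewrite geq_max => /andP[hk2 hkK].
have fl : absz (Num.floor (delta N * N%:R)) = (N %/ (k N).+1)%N.
  by rewrite /delta floor_div.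
rewrite fl.
case: (kN_prop d (e N) N) => [k0|[kNl cN]].
  by move: hk2; rewrite /k k0.
move: kNl cN; rewrite -/(k N); set kk := k N => kNl cN.
move: cN; rewrite /cond => /andP[cN1 cN2].
set n := (N %/ kk.+1)%N.
have hn1 : (n * kk.+1 <= N)%N by apply: leq_trunc_div.
have hn2 : (N < n.+1 * kk.+1)%N by apply: ltn_ceil.
have N1 : (1 <= N)%N by apply: leq_ltn_trans kNl.
have sn : (sN N <= n)%N.
  rewrite leq_divRL //.
  have s2 := sN_sq N.
  case: (leqP (sN N) kk.+1) => h.
    by apply: leq_trans cN1; rewrite leq_mul2r h orbT.
  by apply: leq_trans s2; rewrite leq_mul2l (ltnW h) orbT.
have n1 : (1 <= n)%N by apply: leq_trans (sN_ge1 N1) sn.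
have h2n : (n.*2.+1 <= N)%N by nia.
have hNn : (N <= (kk.+1).*2 * n)%N by nia.
have hE' : E N n <= N%:R ^+ d * a n.
  have [N' eN] : exists N', N = N'.+1 by exists N.-1; rewrite prednK.
  by move: h2n; rewrite eN => h2n; apply: hE.
apply: le_trans hE' _.
apply: le_trans (chain n1 hNn (a0 n) _ cN2) _.
  by apply: le_trans (haT n) _; apply: Thomo.
apply: ler_wpM2r; first exact: Pw_ge0.
rewrite ler_pdivrMr ?ltr0n // mulrC -ler_pdivrMr //.
apply: ltW; apply: lt_le_trans hK0 _; rewrite ler_nat.
exact: leq_trans hkK (leqnSn _).
Qed.

Unset Implicit Arguments.

Theorem corollary7 (R : realType) (d : nat) (A B : finPointedType)
    (p : A -> R) (q : B -> R)
    (mu : probability (Cfg d A) R) (nu : probability (Cfg d B) R)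
    (phi : Cfg d A -> Cfg d B) :
  prob_vector p -> prob_vector q ->
  is_product_measure p mu -> is_product_measure q nu ->
  homomorphism mu nu phi ->
  finitary mu phi ->
  (\int[mu]_x ((coding_radius mu phi x) `^ (d%:R / 2))%E < +oo)%E ->
  exists delta : nat -> R,
    [/\ {homo delta : m n / (m <= n)%N >-> n <= m},
        delta @ \oo --> 0
      & forall eps : R, 0 < eps ->
          \forall N \near \oo,
            EJc p mu phi N (absz (Num.floor (delta N * N%:R)))
              <= eps * (N%:R `^ (d%:R / 2))].
Proof.
move=> pp pq hprod hprodq hhom hfin hint.
have [T [T0 Thomo Tcvg haT]] := @partB R d A B mu phi hfin hint.
apply: (@partC R d T (fun n => fine (mu (S mu phi n))) (EJc p mu phi)) => //.
- by move=> n; apply: fine_ge0; apply: measure_ge0.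
- by move=> N n h; apply: EJc_le.
Qed.
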